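(* Let $\Gamma$ be a telescopic numerical semigroup minimally generated by $r_0<r_1<\cdots<r_h$. If $h\ge 2$, then $r_h\ge 2^{h+1}-1$.
   Context: A numerical semigroup is a submonoid of $(\mathbb N,+)$ with finite complement in $\mathbb N$; it has a unique minimal generating system. $\langle X\rangle$ is the submonoid generated by $X$. For an arrangement $(r_0,\ldots,r_h)$ of the minimal generators, set $d_k=\gcd(r_0,\ldots,r_{k-1})$ for $k=1,\ldots,h+1$. Gluing: a set $A$ of positive integers with nontrivial partition $A=A_1\cup A_2$ is the gluing of $A_1$ and $A_2$ if $\mathrm{lcm}(\gcd A_1,\gcd A_2)\in\langle A_1\rangle\cap\langle A_2\rangle$. $\Gamma$ is free for the arrangement $(r_0,\ldots,r_h)$ if $h=0$, or $h\ge1$, $\{r_0,\ldots,r_h\}$ is the gluing of $\{r_0,\ldots,r_{h-1}\}$ and $\{r_h\}$, and $\langle r_0/d_h,\ldots,r_{h-1}/d_h\rangle$ is free for the arrangement $(r_0/d_h,\ldots,r_{h-1}/d_h)$. $\Gamma$ is telescopic if it is free for the arrangement of its minimal generators in increasing order $r_0<\cdots<r_h$. *)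

(* Defs.v *)
From mathcomp Require Import all_boot.
Set Implicit Arguments. Unset Strict Implicit. Unset Printing Implicit Defensive.

Definition in_monoid (A : seq nat) (n : nat) : Prop :=
  exists c : nat -> nat, n = \sum_(i < size A) c i * nth 0 A i.

Definition numerical_semigroup (G : nat -> Prop) : Prop :=
  [/\ G 0,
      (forall a b, G a -> G b -> G (a + b)) &
      exists N, forall n, N <= n -> G n].

Definition drop_at (i : nat) (r : seq nat) : seq nat := take i r ++ drop i.+1 r.

Definition minimal_generating_system (G : nat -> Prop) (r : seq nat) : Prop :=
  (forall n, G n <-> in_monoid r n) /\
  (forall i, i < size r -> ~ in_monoid (drop_at i r) (nth 0 r i)).

Definition gcd_seq (A : seq nat) : nat := foldr gcdn 0 A.

Definition gluing (A1 A2 : seq nat) : Prop :=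
  A1 != [::] /\ A2 != [::] /\ [seq x <- A1 | x \in A2] = [::] /\
  in_monoid A1 (lcmn (gcd_seq A1) (gcd_seq A2)) /\
  in_monoid A2 (lcmn (gcd_seq A1) (gcd_seq A2)).

(* free for the arrangement s = (r_0,...,r_h); the first argument is fuel
   (= size s), making the recursion on h structural.  Here
   take h s = (r_0,...,r_{h-1}), nth 0 s h = r_h, d_h = gcd_seq (take h s). *)
Fixpoint free_fuel (k : nat) (s : seq nat) : Prop :=
  match k with
  | 0 => True
  | k'.+1 =>
      let h := (size s).-1 in
      h = 0 \/
      (gluing (take h s) [:: nth 0 s h] /\
       free_fuel k' [seq x %/ gcd_seq (take h s) | x <- take h s])
  end.

Definition free_arrangement (s : seq nat) : Prop := free_fuel (size s) s.

Definition telescopic (G : nat -> Prop) (r : seq nat) : Prop :=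
  minimal_generating_system G r /\ sorted ltn r /\ free_arrangement r.

(* Main.v *)
Require Import Defs.
From mathcomp Require Import all_boot zify.

Lemma gcd_seq_dvd l x : x \in l -> gcd_seq l %| x.
Proof.
elim: l => [|y l IH] //=; rewrite inE => /orP[/eqP->|H]; first exact: dvdn_gcdl.
exact: dvdn_trans (dvdn_gcdr _ _) (IH H).
Qed.

Lemma gcd_seq_cons x l : gcd_seq (x :: l) = gcdn x (gcd_seq l).
Proof. by []. Qed.

Lemma gcd_seq_cat l m : gcd_seq (l ++ m) = gcdn (gcd_seq l) (gcd_seq m).
Proof. by elim: l => [|y l IH] /=; rewrite ?gcd0n // IH gcdnA. Qed.

Lemma gcd_seq_map_div d t : 0 < d -> all (dvdn d) t ->
  gcd_seq [seq x %/ d | x <- t] * d = gcd_seq t.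
Proof.
move=> d0; elim: t => [|x t IH] //= /andP[dx dt].
by rewrite muln_gcdl divnK // IH.
Qed.

Lemma in_monoid_dvd A n : in_monoid A n -> gcd_seq A %| n.
Proof.
case=> c ->; apply: dvdn_sum => i _; apply: dvdn_mull.
by apply: gcd_seq_dvd; apply: mem_nth.
Qed.

Lemma in_monoid_cat A B n : in_monoid A n -> in_monoid (A ++ B) n.
Proof.
case=> c ->; exists (fun i => if i < size A then c i else 0).
rewrite size_cat big_split_ord /= [X in _ = _ + X]big1 ?addn0.
  apply: eq_bigr => i _; rewrite ltn_ord nth_cat ltn_ord //.
by move=> i _; rewrite ltnNge leq_addr.
Qed.

Lemma in_monoid_map_div d t n : 0 < d -> all (dvdn d) t ->
  in_monoid [seq x %/ d | x <- t] n -> in_monoid t (n * d).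
Proof.
move=> d0 /allP dt [c ->]; exists c; rewrite big_distrl /= size_map.
apply: eq_bigr => i _; rewrite (nth_map 0) // -mulnA divnK //.
by apply: dt; apply: mem_nth.
Qed.

Lemma in_monoid0 A : in_monoid A 0.
Proof. by exists (fun _ => 0); rewrite big1. Qed.

Definition Pl (s : seq nat) := forall k, 0 < k < size s ->
  in_monoid (take k s) (lcmn (gcd_seq (take k s)) (nth 0 s k)).

Lemma free_P n s : size s = n -> 0 < nth 0 s 0 -> free_fuel n s -> Pl s.
Proof.
elim: n s => [|n IH] s Hs s0.
  by move=> _ k; rewrite Hs andbF.
rewrite /= Hs /=; case=> [Hn|[Hg Hf]].
  by move=> k; rewrite Hs Hn; case: k.
have n0 : 0 < n.
  by case: n {IH Hs Hf} Hg => // -[/negP]; rewrite take0.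
set d := gcd_seq (take n s) in Hf Hg.
have Hsn : n <= size s by rewrite Hs.
have dall : all (dvdn d) (take n s) by apply/allP => x; apply: gcd_seq_dvd.
have dnth : forall k, k < n -> d %| nth 0 s k.
  move=> k kn; apply: gcd_seq_dvd; rewrite -(nth_take 0 kn); apply: mem_nth.
  by rewrite size_takel.
have d0 : 0 < d.
  have := dnth 0 n0; rewrite lt0n; apply: contraTneq => ->.
  by rewrite dvd0n -lt0n s0.
move=> k; rewrite Hs => /andP[k0]; rewrite ltnS leq_eqVlt => /orP[/eqP->|kn].
  by case: Hg => _ [_ [_ [/= H _]]]; rewrite gcdn0 in H.
have Hs' : size [seq x %/ d | x <- take n s] = n by rewrite size_map size_takel.
have s0' : 0 < nth 0 [seq x %/ d | x <- take n s] 0.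
  rewrite (nth_map 0) ?size_takel // nth_take // divn_gt0 //.
  by apply: dvdn_leq => //; apply: dnth.
have := IH _ Hs' s0' Hf k; rewrite Hs' k0 kn => /(_ isT).
rewrite -map_take take_takel ?(ltnW kn) // (nth_map 0) ?size_takel // nth_take //.
have dk : all (dvdn d) (take k s).
  by rewrite -(take_takel s (ltnW kn)); apply/allP=> x /mem_take; apply/allP.
move/(in_monoid_map_div _ _ _ d0 dk); rewrite muln_lcml gcd_seq_map_div // divnK //.
exact: dnth.
Qed.

Theorem proposition4p1 (G : nat -> Prop) (h : nat) (r : seq nat) :
  numerical_semigroup G ->
  size r = h.+1 ->
  minimal_generating_system G r ->
  sorted ltn r ->
  telescopic G r ->
  2 <= h ->
  2 ^ h.+1 - 1 <= nth 0 r h.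
Proof.
move=> [_ _ [N HN]] Hs [Hgen Hmin] Hsort [_ [_ Hfree]] _.
have r0 : 0 < nth 0 r 0.
  rewrite lt0n; apply/negP => /eqP E; apply: (Hmin 0); first by rewrite Hs.
  by rewrite E; apply: in_monoid0.
have HP := free_P _ _ Hs r0 (eq_ind _ (fun m => free_fuel m r) Hfree _ Hs); move: HP; rewrite /Pl Hs => HP.
pose d j := gcd_seq (take j r).
have dS : forall k, k <= h -> d k.+1 = gcdn (d k) (nth 0 r k).
  move=> k kh; rewrite /d (take_nth 0) ?Hs // -cats1 gcd_seq_cat /=.
  by rewrite gcdn0.
have dpos : forall k, 0 < k -> k <= h.+1 -> 0 < d k.
  move=> k k0 kh; have : d k %| nth 0 r 0.
    apply: gcd_seq_dvd; rewrite -(nth_take 0 k0); apply: mem_nth.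
    by rewrite size_takel // Hs.
  by rewrite lt0n; apply: contraTneq => ->; rewrite dvd0n -lt0n.
have dlt : forall k, 0 < k <= h -> d k.+1 < d k.
  move=> k /andP[k0 kh]; rewrite dS //.
  have Hle : gcdn (d k) (nth 0 r k) <= d k.
    by apply: dvdn_leq; [apply: dpos => //; apply: leqW | apply: dvdn_gcdl].
  rewrite ltn_neqAle Hle andbT; apply/eqP => E.
  have Hdv : d k %| nth 0 r k by rewrite -E dvdn_gcdr.
  have := HP k; rewrite k0 ltnS kh => /(_ isT).
  rewrite -/(d k) (lcmn_idPr Hdv) => Hm.
  apply: (Hmin k); first by rewrite Hs ltnS.
  exact: in_monoid_cat.
have d1 : d h.+1 = 1.
  rewrite /d -Hs take_size.
  have H1 := in_monoid_dvd _ _ ((Hgen N).1 (HN N (leqnn N))).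
  have H2 := in_monoid_dvd _ _ ((Hgen N.+1).1 (HN N.+1 (leqnSn N))).
  by apply/eqP; rewrite -dvdn1 -(dvdn_addr 1 H1) addn1.
have main : forall k, k <= h -> d k.+1 * (2 ^ k.+1 - 1) <= nth 0 r k.
  elim=> [_|k IH kh].
    by rewrite /d (take_nth 0) ?Hs // take0 /= gcdn0 muln1.
  have IH' := IH (ltnW kh).
  have rlt : nth 0 r k < nth 0 r k.+1.
    apply: (sorted_ltn_nth ltn_trans 0 Hsort) => //=; rewrite ?inE /= Hs ?ltnS // ltnW // ltnW.
  have [a Ea] : exists a, d k.+1 = a * d k.+2.
    by apply/dvdnP; rewrite dS // dvdn_gcdl.
  have [b Eb] : exists b, nth 0 r k.+1 = b * d k.+2.
    by apply/dvdnP; rewrite dS // dvdn_gcdr.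
  have g0 : 0 < d k.+2 by apply: dpos.
  have a2 : 2 <= a.
    have := dlt k.+1; rewrite kh => /(_ isT); rewrite Ea.
    case: a {Ea} => [|[|a]] //; by rewrite mul1n ltnn.
  rewrite Eb mulnC leq_pmul2r //.
  have : a * (2 ^ k.+1 - 1) < b.
    by rewrite -(ltn_pmul2r g0) -Eb mulnAC -Ea; apply: leq_ltn_trans IH' rlt.
  have X1 : 1 <= 2 ^ k.+1 by rewrite expn_gt0.
  have : 2 * (2 ^ k.+1 - 1) <= a * (2 ^ k.+1 - 1) by rewrite leq_mul2r a2 orbT.
  rewrite [2 ^ k.+2]expnS; move: (2 ^ k.+1) (a * _) X1 => X Y; lia.
by have := main h (leqnn h); rewrite d1 mul1n.
Qed.
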